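(* Let $T$ be a tree with edges $e_1,\ldots,e_m$. For $k\neq l$, the forest $T-\{e_k,e_l\}$ has three connected components, exactly one of which contains an end-vertex of both $e_k$ and $e_l$; let $m_1(e_k,e_l)$ and $m_2(e_k,e_l)$ be the numbers of edges in the other two components. Then $$WW_e(T)=2W_e(T)+\sum_{k=1}^{m-1}\sum_{l=k+1}^{m}m_1(e_k,e_l)\,m_2(e_k,e_l)-\binom{m}{2}.$$
   Context: The distance $d(e,f)$ between edges is the distance between $e$ and $f$ as vertices of the line graph. The edge-Wiener index is $W_e(G)=\sum_{\{e,f\}\subseteq E(G)}d(e,f)$ and the edge-hyper-Wiener index is $WW_e(G)=\frac12\sum_{\{e,f\}\subseteq E(G)}d(e,f)+\frac12\sum_{\{e,f\}\subseteq E(G)}d(e,f)^2$, sums over unordered pairs of distinct edges. *)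

(* Defs.v *)
From mathcomp Require Import all_boot all_order all_algebra.
Set Implicit Arguments. Unset Strict Implicit. Unset Printing Implicit Defensive.
Import Order.TTheory GRing.Theory Num.Theory.

(* A simple graph on a finite vertex type T is a symmetric irreflexive e : rel T. *)

Definition edges (T : finType) (e : rel T) : {set {set T}} :=
  [set A : {set T} | [exists x, exists y, e x y && (A == [set x; y])]].

Definition line_adj (T : finType) (e : rel T) : rel {set T} :=
  fun A B => [&& A \in edges e, B \in edges e, A != B & A :&: B != set0].

(* Graph distance: least n such that there is an r-walk of length n from x to y.
   (Shortest walks have length < #|U|.) *)
Definition gdist (U : finType) (r : rel U) (x y : U) : nat :=
  find (fun n => [exists p : n.-tuple U, path r x p && (last x p == y)])
       (iota 0 #|U|).

Definition edist (T : finType) (e : rel T) (A B : {set T}) : nat :=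
  gdist (line_adj e) A B.

Definition connected (T : finType) (e : rel T) : Prop := forall x y, connect e x y.
Definition acyclic (T : finType) (e : rel T) : Prop :=
  forall c : seq T, uniq c -> 2 < size c -> ~~ cycle e c.
Definition is_tree (T : finType) (e : rel T) : Prop :=
  [/\ symmetric e, irreflexive e, connected e & acyclic e].

Definition Wedge (T : finType) (e : rel T) : nat :=
  let s := enum (edges e) in
  \sum_(k < size s) \sum_(l < size s | k < l) edist e (nth set0 s k) (nth set0 s l).

Definition Wedge2 (T : finType) (e : rel T) : nat :=
  let s := enum (edges e) in
  \sum_(k < size s) \sum_(l < size s | k < l) (edist e (nth set0 s k) (nth set0 s l)) ^ 2.

Local Open Scope ring_scope.
Definition WWedge (T : finType) (e : rel T) : rat :=
  (Wedge e)%:R / 2 + (Wedge2 e)%:R / 2.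
Local Close Scope ring_scope.

Definition del2 (T : finType) (e : rel T) (f g : {set T}) : rel T :=
  fun x y => [&& e x y, [set x; y] != f & [set x; y] != g].

Definition comps (T : finType) (r : rel T) : {set {set T}} :=
  [set [set y | connect r x y] | x : T].

Definition nedges_in (T : finType) (e : rel T) (f g C : {set T}) : nat :=
  #|[set A in edges e | [&& A != f, A != g & A \subset C]]|.

(* m1(f,g) * m2(f,g): product of the edge counts of the components of
   T - {f,g} that do NOT contain an end-vertex of both f and g. *)
Definition m12 (T : finType) (e : rel T) (f g : {set T}) : nat :=
  \prod_(C in comps (del2 e f g) | ~~ ((C :&: f != set0) && (C :&: g != set0)))
     nedges_in e f g C.

(* Main.v *)
Require Import Defs.
From mathcomp Require Import all_boot all_order all_algebra zify lra.
Import Order.TTheory GRing.Theory Num.Theory.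

Set Implicit Arguments. Unset Strict Implicit. Unset Printing Implicit Defensive.

Section Tree.
Variable T : finType.
Variable e : rel T.
Hypothesis esym : symmetric e.
Hypothesis eirr : irreflexive e.
Hypothesis econn : connected e.
Hypothesis eacyc : acyclic e.

Definition rem (r : rel T) (A : {set T}) : rel T :=
  fun x y => r x y && ([set x; y] != A).

Lemma set2C (x y : T) : [set x; y] = [set y; x].
Proof. by rewrite setUC. Qed.

Lemma rem_sym (r : rel T) A : symmetric r -> symmetric (rem r A).
Proof. by move=> rs x y; rewrite /rem rs set2C. Qed.

Lemma rem_sub (r : rel T) A : subrel (rem r A) r.
Proof. by move=> x y /andP[]. Qed.

Lemma connect_rem_sub (r : rel T) A x y : connect (rem r A) x y -> connect r x y.
Proof.
by apply: connect_sub => u v /rem_sub; apply: connect1.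
Qed.

Lemma uniq_connect (r : rel T) x y : connect r x y ->
  exists p, [/\ path r x p, uniq (x::p) & last x p = y].
Proof.
move/connectP=> [p pp ->]. case: (shortenP pp) => p' pp' u _. by exists p'.
Qed.

Lemma L1 (r : rel T) u v x y : symmetric r -> connect r x y ->
  connect (rem r [set u; v]) x y \/
  ((connect (rem r [set u; v]) x u || connect (rem r [set u; v]) x v) &&
   (connect (rem r [set u; v]) y u || connect (rem r [set u; v]) y v)).
Proof.
move=> rs /connectP[p pp ->]; set r' := rem r _.
have r's : connect_sym r' by apply/sym_connect_sym/rem_sym.
elim: p x pp => [|z p IH] x /=; first by left.
case/andP=> rxz /IH {IH}.
case rem_xz: (r' x z).
  have cxz : connect r' x z by apply: connect1.
  case=> [cz|/andP[H1 H2]]; first by left; apply: connect_trans cxz cz.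
  right; rewrite H2 andbT.
  by case/orP: H1 => H; apply/orP; [left|right]; apply: connect_trans cxz H.
move: rem_xz; rewrite /r' /rem rxz /= => /negbFE/eqP exz.
have xin : x \in [set u; v] by rewrite -exz set21.
have zin : z \in [set u; v] by rewrite -exz set22.
have xuv : connect r' x u || connect r' x v.
  by case/set2P: xin => ->; rewrite connect0 ?orbT.
have zuv : connect r' z u || connect r' z v.
  by case/set2P: zin => ->; rewrite connect0 ?orbT.
move=> H; right; rewrite xuv /=.
case: H => [czl|/andP[_ //]].
by case/orP: zuv => H; apply/orP; [left|right]; apply: connect_trans H; rewrite r's.
Qed.

Lemma edge_noconn p q : e p q -> ~~ connect (rem e [set p; q]) p q.
Proof.
move=> epq; apply/negP=> /uniq_connect[P [pP uP lP]].
case: P pP uP lP => [|z [|z' P]] pP uP lP.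
- by move: epq; rewrite -lP eirr.
- by move: pP; rewrite /= /rem -lP eqxx andbF.
have := @eacyc [:: p, z, z' & P] uP isT; apply/negP; apply/negPn.
rewrite /cycle rcons_path.
apply/andP; split.
  by apply: sub_path pP => a b /rem_sub.
by rewrite lP esym.
Qed.


Lemma edge_rep A : A \in edges e -> exists p q, e p q /\ A = [set p; q].
Proof. by rewrite inE => /existsP[p /existsP[q /andP[epq /eqP->]]]; exists p, q. Qed.

Lemma edgeP p q : e p q -> [set p; q] \in edges e.
Proof. by move=> epq; rewrite inE; apply/existsP; exists p; apply/existsP; exists q; rewrite epq eqxx. Qed.

Lemma connect_all_side p q x : e p q ->
  connect (rem e [set p; q]) x p || connect (rem e [set p; q]) x q.
Proof.
move=> epq; case: (L1 p q esym (econn x p)) => [->//|/andP[H _]] //.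
Qed.

Lemma side p q x y : e p q ->
  connect (rem e [set p; q]) x y =
  (connect (rem e [set p; q]) q x == connect (rem e [set p; q]) q y).
Proof.
move=> epq; set c := connect _.
have cs : connect_sym (rem e [set p; q]) by apply/sym_connect_sym/rem_sym.
have npq : ~~ c p q by apply: edge_noconn.
have ax : c x p || c x q := connect_all_side x epq.
have ay : c y p || c y q := connect_all_side y epq.
case cx: (c q x); case cy: (c q y) => /=.
- by apply: connect_trans cy; rewrite /c cs.
- apply/negP=> cxy; move/negP: cy; apply; exact: connect_trans cx cxy.
- apply/negP=> cxy; move/negP: cx; apply; apply: connect_trans cy _; by rewrite /c cs.
- have cx' : c x q = false by rewrite /c cs.
  have cy' : c y q = false by rewrite /c cs.
  move: ax ay; rewrite cx' cy' !orbF => xp yp.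
  by apply: connect_trans xp _; rewrite /c cs.
Qed.

Definition conn g (a b : {set T}) :=
  [exists x, exists y, [&& x \in a, y \in b & connect (rem e g) x y]].
Definition sepb g a b := [&& g != a, g != b & ~~ conn g a b].
Definition Sset a b := [set g in edges e | sepb g a b].
Definition N a b := #|Sset a b|.

Lemma in_edge_conn g A x y : A \in edges e -> A != g -> x \in A -> y \in A ->
  connect (rem e g) x y.
Proof.
case/edge_rep=> p [q [epq ->]] neq.
have r1 : rem e g p q by rewrite /rem epq neq.
have r2 : rem e g q p by rewrite /rem esym epq set2C neq.
by case/set2P=> ->; case/set2P=> ->; rewrite ?connect0 ?connect1.
Qed.

Lemma edge_mem A : A \in edges e -> exists x, x \in A.
Proof. by case/edge_rep=> p [q [_ ->]]; exists p; rewrite set21. Qed.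

Lemma conn_any g a b x y : a \in edges e -> b \in edges e -> a != g -> b != g ->
  conn g a b -> x \in a -> y \in b -> connect (rem e g) x y.
Proof.
move=> aE bE ag bg /existsP[x' /existsP[y' /and3P[xa yb c]]] xa' yb'.
have cs : connect_sym (rem e g) by apply/sym_connect_sym/rem_sym.
apply: connect_trans (in_edge_conn aE ag xa' xa) _.
by apply: connect_trans c (in_edge_conn bE bg yb yb').
Qed.

Lemma connI g (a b : {set T}) x y : x \in a -> y \in b -> connect (rem e g) x y -> conn g a b.
Proof. by move=> xa yb c; apply/existsP; exists x; apply/existsP; exists y; rewrite xa yb c. Qed.

Lemma walk_hits g a p : a \in edges e -> a != g -> path (line_adj e) a p ->
  g \notin p -> conn g a (last a p).
Proof.
elim: p a => [|c p IH] a aE ag /=.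
  by move=> _ _; case: (edge_mem aE) => x xa; apply: (connI xa xa).
case/andP=> /and4P[_ cE ac /set0Pn[w wac]] pp; rewrite inE negb_or => /andP[gc gp].
move: wac; rewrite inE => /andP[wa wc].
have cg : c != g by rewrite eq_sym.
have /existsP[x' /existsP[y /and3P[xc yl cxy]]] := IH c cE cg pp gp.
apply: (connI wa yl).
exact: connect_trans (in_edge_conn cE cg wc xc) cxy.
Qed.

Lemma lower a b p : a \in edges e -> a != b -> path (line_adj e) a p ->
  last a p = b -> N a b < size p.
Proof.
move=> aE ab pp lp.
have bp : b \in p.
  by have := mem_last a p; rewrite lp inE eq_sym (negbTE ab).
have sub : b |: Sset a b \subset [pred x in p].
  apply/subsetP=> g; rewrite !inE => /orP[/eqP->//|/andP[gE /and3P[ga gb nc]]].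
  apply/negPn/negP=> gp; move/negP: nc; apply.
  rewrite -lp; apply: walk_hits => //; by rewrite eq_sym.
have := subset_leq_card sub; rewrite cardsU1 => H.
have bS : b \notin Sset a b by rewrite inE /sepb eqxx /= !andbF.
rewrite bS add1n in H.
exact: leq_trans H (card_size p).
Qed.

Lemma path_avoid (r : rel T) (c : {set T}) t x P : t \in c -> t \notin x :: P -> path r x P ->
  path (rem r c) x P.
Proof.
move=> tc; elim: P x => [|y P IH] x //=.
rewrite !inE !negb_or => /andP[tx /andP[ty tP]] /andP[rxy pP].
rewrite IH ?inE ?negb_or ?ty // andbT /rem rxy /=.
by apply/negP=> /eqP exy; move: tc; rewrite -exy !inE (negbTE tx) (negbTE ty).
Qed.

Lemma upper n a b : N a b < n -> a \in edges e -> b \in edges e -> a != b ->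
  exists p, [/\ path (line_adj e) a p, last a p = b & size p <= (N a b).+1].
Proof.
elim: n a => [//|n IH] a Nab aE bE ab.
have adj1 : a :&: b != set0 -> exists p, [/\ path (line_adj e) a p, last a p = b & size p <= (N a b).+1].
  by move=> H; exists [:: b]; rewrite /= /line_adj aE bE ab H.
case/edge_rep: (aE) => x [y [exy ea]].
case: (edge_mem bE) => w wb.
have [t [ta ctw]] : exists t, t \in a /\ connect (rem e a) t w.
  have cs : connect_sym (rem e a) by apply/sym_connect_sym/rem_sym.
  case/orP: (connect_all_side w exy); rewrite -ea => H.
    by exists x; rewrite ea set21 -ea cs.
  by exists y; rewrite ea set22 -ea cs.
case/uniq_connect: ctw => P [pP uP lP].
case: P pP uP lP => [|z P] pP uP lP.
  by apply: adj1; apply/set0Pn; exists t; rewrite inE ta /=; move: lP => /= ->.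
move: pP => /= /andP[/andP[etz cna] pP].
move: uP => /= /andP[]; rewrite inE negb_or => /andP[tz tP] uP.
set c := [set t; z] in cna.
have cE : c \in edges e by apply: edgeP.
have tc : t \in c by rewrite set21.
have zc : z \in c by rewrite set22.
case: (eqVneq c b) => [cb|cb].
  by apply: adj1; apply/set0Pn; exists t; rewrite inE ta -cb tc.
have ca : c != a by [].
have tnot : t \notin z :: P by rewrite inE negb_or tz tP.
have pc : path (rem e c) z P := path_avoid tc tnot (sub_path (@rem_sub e a) pP).
have czw : connect (rem e c) z (last z P) by apply/connectP; exists P.
have azw : connect (rem e a) z (last z P) by apply/connectP; exists P.
move: lP => /= lP; rewrite lP in czw azw.
have csc : connect_sym (rem e c) by apply/sym_connect_sym/rem_sym.
have cS : c \in Sset a b.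
  rewrite inE cE /sepb ca cb /=.
  apply/negP => cab.
  have ac : a != c by rewrite eq_sym.
  have bc : b != c by rewrite eq_sym.
  have ctw := conn_any aE bE ac bc cab ta wb.
  have ctz : connect (rem e c) t z by apply: connect_trans ctw _; rewrite csc.
  by move: (edge_noconn etz); rewrite ctz.
have sub : Sset c b \subset Sset a b :\ c.
  apply/subsetP => g; rewrite !inE => /andP[gE /and3P[gc gb ncg]].
  rewrite gc gE /sepb gb /=.
  have ga : g != a.
    apply/negP => /eqP ga; move/negP: ncg; apply; rewrite ga.
    exact: connI zc wb azw.
  rewrite ga /=; apply/negP => cg; move/negP: ncg; apply.
  have ag : a != g by rewrite eq_sym.
  have bg : b != g by rewrite eq_sym.
  exact: connI tc wb (conn_any aE bE ag bg cg ta wb).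
have ltN : N c b < N a b.
  by rewrite /N (cardsD1 c (Sset a b)) cS add1n ltnS; apply: subset_leq_card sub.
have Ncb : N c b < n.
  by move: Nab ltN; clear; move=> H1 H2; rewrite -ltnS; apply: leq_trans H2 H1.

have [p' [pp' lp' sp']] := IH c Ncb cE bE cb.
exists (c :: p'); split => /=; last by rewrite ltnS (leq_trans sp' ltN).
  rewrite pp' andbT /line_adj aE cE eq_sym ca /=.
  by apply/set0Pn; exists t; rewrite inE ta tc.
by [].
Qed.


Lemma find_first (P : pred nat) M D : D < M -> P D -> (forall n, n < D -> ~~ P n) ->
  find P (iota 0 M) = D.
Proof.
move=> DM PD nP.
have -> : M = D + (M - D) by rewrite subnKC // ltnW.
rewrite iotaD find_cat size_iota add0n.
have -> : has P (iota 0 D) = false.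
  by apply/negbTE/hasPn => n; rewrite mem_iota add0n => /andP[_]; apply: nP.
case E: (M - D) => [|k]; first by move: DM; rewrite -subn_gt0 E.
by rewrite /= PD addn0.
Qed.

Lemma edist_val a b : a \in edges e -> b \in edges e -> a != b ->
  edist e a b = (N a b).+1.
Proof.
move=> aE bE ab; rewrite /edist /gdist; apply: find_first.
- have sub : Sset a b \subset ~: [set a; b].
    apply/subsetP => g; rewrite !inE => /andP[_ /and3P[ga gb _]].
    by rewrite negb_or ga gb.
  have := subset_leq_card sub; have := cardsC [set a; b]; rewrite cards2 ab.
  rewrite /N; move: #|_| #|_| #|_| => x y z; clear; lia.
- have [p [pp lp sp]] := upper (ltnSn (N a b)) aE bE ab.
  have lo := lower aE ab pp lp.
  have Hs : size p == (N a b).+1 by rewrite eqn_leq sp lo.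
  apply/existsP; exists (Tuple Hs) => /=; by rewrite pp lp eqxx.
- move=> n nN; apply/negP => /existsP[t /andP[pt /eqP lt]].
  have := lower aE ab pt lt; rewrite size_tuple => H.
  by move: nN; rewrite ltnS leqNgt H.
Qed.


Definition r2 g h := rem (rem e g) h.
Lemma del2E g h : del2 e g h =2 r2 g h.
Proof. by move=> x y; rewrite /del2 /r2 /rem andbA. Qed.

Definition Rp (P : {set T} * {set T}) := [&& P.1 \in edges e, P.2 \in edges e & P.2 != P.1].

Section Pair.
Variables p q u v : T.
Hypothesis epq : e p q.
Hypothesis euv : e u v.
Local Notation g := [set p; q].
Local Notation h := [set u; v].
Hypothesis hg : h != g.
Hypothesis oh : forall x, x \in h -> connect (rem e g) x q.
Hypothesis og : forall x, x \in g -> connect (rem e h) x u.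

Definition sg x := connect (rem e g) q x.
Definition sh x := connect (rem e h) u x.

Lemma csg : connect_sym (rem e g). Proof. exact/sym_connect_sym/rem_sym. Qed.
Lemma csh : connect_sym (rem e h). Proof. exact/sym_connect_sym/rem_sym. Qed.
Lemma cs2 : connect_sym (r2 g h). Proof. exact/sym_connect_sym/rem_sym/rem_sym. Qed.

Lemma cg x y : connect (rem e g) x y = (sg x == sg y). Proof. exact: (side x y epq). Qed.
Lemma ch x y : connect (rem e h) x y = (sh x == sh y). Proof. have evu : e v u by rewrite esym. by have := side x y evu; rewrite [[set v; u]]set2C. Qed.

Lemma sgp : sg p = false.
Proof. by apply/negbTE; rewrite /sg csg; apply: edge_noconn. Qed.
Lemma sgq : sg q. Proof. exact: connect0. Qed.
Lemma sgh x : x \in h -> sg x. Proof. by move/oh; rewrite /sg csg. Qed.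
Lemma shu : sh u. Proof. exact: connect0. Qed.
Lemma shv : sh v = false.
Proof. by apply/negbTE; apply: edge_noconn. Qed.
Lemma shg x : x \in g -> sh x. Proof. by move/og; rewrite /sh csh. Qed.

Lemma sub2g x y : connect (r2 g h) x y -> connect (rem e g) x y.
Proof. by apply: connect_sub => a b /andP[H _]; apply: connect1. Qed.
Lemma sub2h x y : connect (r2 g h) x y -> connect (rem e h) x y.
Proof.
apply: connect_sub => a b /andP[/andP[eab _] H]; apply: connect1.
by rewrite /rem eab H.
Qed.

Lemma r2C x y : connect (r2 g h) x y = (sg x == sg y) && (sh x == sh y).
Proof.
apply/idP/andP.
  by move=> c; split; [rewrite -cg; apply: sub2g | rewrite -ch; apply: sub2h].
move=> [Hg Hh].
have := L1 u v (rem_sym g esym) (etrans (cg x y) Hg).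
case=> [//|/andP[H1 H2]].
have kx : forall w, connect (r2 g h) x w -> sh x = sh w.
  by move=> w /sub2h; rewrite ch => /eqP.
have ky : forall w, connect (r2 g h) y w -> sh y = sh w.
  by move=> w /sub2h; rewrite ch => /eqP.
move: Hh; have su := shu; have sv := shv.
case/orP: H1 => H1; case/orP: H2 => H2.
- by move=> _; apply: connect_trans H1 _; rewrite cs2.
- by rewrite (kx _ H1) (ky _ H2) su sv.
- by rewrite (kx _ H1) (ky _ H2) su sv.
- by move=> _; apply: connect_trans H1 _; rewrite cs2.
Qed.

Lemma noFF x : sg x || sh x.
Proof.
case sgx: (sg x) => //=.
have cxp : connect (rem e g) x p.
  have := connect_all_side x epq; rewrite (cg x q) sgx sgq orbF.
  done.
case: (L1 u v (rem_sym g esym) cxp) => [c|/andP[_ H]].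
  by have := sub2h c; rewrite ch => /eqP->; apply: shg; rewrite set21.
exfalso; case/orP: H => /sub2g; rewrite cg sgp => /eqP H; move: (H).
  by rewrite sgh ?set21.
by rewrite sgh ?set22.
Qed.

Definition cls x := [set y | connect (del2 e g h) x y].
Lemma clsE x : cls x = [set y | (sg y == sg x) && (sh y == sh x)].
Proof.
apply/setP => y; rewrite !inE (eq_connect (del2E g h)) r2C.
by rewrite (eq_sym (sg x)) (eq_sym (sh x)).
Qed.

Lemma edge_key A x z : A \in edges e -> A != g -> A != h -> x \in A -> z \in A ->
  sg x = sg z /\ sh x = sh z.
Proof.
move=> AE Ag Ah xA zA; split; apply/eqP.
  by rewrite -cg; exact: (in_edge_conn AE Ag xA zA).
by rewrite -ch; exact: (in_edge_conn AE Ah xA zA).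
Qed.

Definition EX := [set A in edges e | [&& A != g, A != h & A \subset cls p]].
Definition EY := [set A in edges e | [&& A != g, A != h & A \subset cls v]].

Lemma subX A x : A \in edges e -> A != g -> A != h -> x \in A ->
  (A \subset cls p) = (~~ sg x && sh x).
Proof.
move=> AE Ag Ah xA; rewrite clsE sgp shg ?set21 //.
apply/subsetP/idP.
  by move=> /(_ x xA); rewrite inE; case: (sg x); case: (sh x).
move=> H z zA; rewrite inE; have [-> ->] := edge_key AE Ag Ah zA xA.
by move: H; case: (sg x); case: (sh x).
Qed.

Lemma subY A x : A \in edges e -> A != g -> A != h -> x \in A ->
  (A \subset cls v) = (sg x && ~~ sh x).
Proof.
move=> AE Ag Ah xA; rewrite clsE sgh ?set22 // shv.
apply/subsetP/idP.
  by move=> /(_ x xA); rewrite inE; case: (sg x); case: (sh x).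
move=> H z zA; rewrite inE; have [-> ->] := edge_key AE Ag Ah zA xA.
by move: H; case: (sg x); case: (sh x).
Qed.

Lemma conng a b x y : a \in edges e -> b \in edges e -> a != g -> b != g ->
  x \in a -> y \in b -> conn g a b = (sg x == sg y).
Proof.
move=> aE bE ag bg xa yb; apply/idP/idP.
  by move/(conn_any aE bE ag bg) => /(_ x y xa yb); rewrite cg.
by rewrite -cg; apply: connI.
Qed.

Lemma connh a b x y : a \in edges e -> b \in edges e -> a != h -> b != h ->
  x \in a -> y \in b -> conn h a b = (sh x == sh y).
Proof.
move=> aE bE ag bg xa yb; apply/idP/idP.
  by move/(conn_any aE bE ag bg) => /(_ x y xa yb); rewrite ch.
by rewrite -ch; apply: connI.
Qed.

Lemma inEXY A :
  ((A \in EX) = [&& A \in edges e, A != g, A != h & A \subset cls p]) *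
  ((A \in EY) = [&& A \in edges e, A != g, A != h & A \subset cls v]).
Proof. by rewrite /EX /EY !inE. Qed.

Lemma pairs_eq :
  [set P | Rp P && (sepb g P.1 P.2 && sepb h P.1 P.2)] = setX EX EY :|: setX EY EX.
Proof.
apply/setP => [[a b]]; rewrite in_setU !in_setX /= !inEXY.
rewrite (_ : ((a, b) \in _) = Rp (a, b) && (sepb g a b && sepb h a b)); last by rewrite inE.
rewrite /Rp /=.
case aE: (a \in edges e) => //=; case bE: (b \in edges e) => //=; rewrite ?andbF //.
rewrite /sepb.
case: (eqVneq a g) => [->|ag]; first by rewrite /= ?andbF.
case: (eqVneq b g) => [->|bg]; first by rewrite /= ?andbF.
case: (eqVneq a h) => [->|ah]; first by rewrite /= ?andbF.
case: (eqVneq b h) => [->|bh]; first by rewrite /= ?andbF.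
rewrite /=.
case: (edge_mem aE) => x xa; case: (edge_mem bE) => y yb.
rewrite (subX aE ag ah xa) (subY aE ag ah xa) (subX bE bg bh yb) (subY bE bg bh yb).
rewrite (conng aE bE ag bg xa yb) (connh aE bE ah bh xa yb).
case: (eqVneq b a) => [ba|ba] /=.
  by move: yb; rewrite ba => ya; have [-> ->] := edge_key aE ag ah ya xa; case: (sg x); case: (sh x).
have := noFF x; have := noFF y.
by case: (sg x); case: (sh x); case: (sg y); case: (sh y).
Qed.

Lemma count_pairs :
  \sum_(P | Rp P) (sepb g P.1 P.2 && sepb h P.1 P.2 : nat) = 2 * (#|EX| * #|EY|).
Proof.
rewrite -[LHS]/(\sum_(P | Rp P) nat_of_bool (sepb g P.1 P.2 && sepb h P.1 P.2)).
have -> : \sum_(P | Rp P) nat_of_bool (sepb g P.1 P.2 && sepb h P.1 P.2) =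
          #|[set P | Rp P && (sepb g P.1 P.2 && sepb h P.1 P.2)]|.
  rewrite -sum1_card big_mkcond [RHS]big_mkcond; apply: eq_bigr => P _.
  by rewrite inE; case: (Rp P) => //=; case: (sepb g P.1 P.2 && sepb h P.1 P.2).
rewrite pairs_eq cardsU !cardsX.
have -> : setX EX EY :&: setX EY EX = set0.
  apply/setP => [[a b]]; rewrite in_setI !in_setX /= !inEXY in_set0.
  apply/negbTE/negP => /andP[/andP[/and4P[aE ag ah aX] _] /andP[/and4P[_ _ _ aY] _]].
  case: (edge_mem aE) => x xa.
  move: aX aY; rewrite (subX aE ag ah xa) (subY aE ag ah xa).
  by case: (sg x); case: (sh x).
by rewrite cards0 subn0 mulnC mul2n -addnn.
Qed.

Lemma cls_eq x y : sg x = sg y -> sh x = sh y -> cls x = cls y.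
Proof. by move=> e1 e2; rewrite !clsE e1 e2. Qed.

Lemma cls_comps x : cls x \in comps (del2 e g h).
Proof. by apply/imsetP; exists x. Qed.

Lemma m12E : m12 e g h = #|EX| * #|EY|.
Proof.
rewrite /m12.
have FX : cls p :&: h = set0.
  apply/setP => y; rewrite in_setI clsE inE in_set0 sgp.
  apply/negbTE/negP => /andP[/andP[/eqP sy _] yh]; by rewrite sgh in sy.
have FY : cls v :&: g = set0.
  apply/setP => y; rewrite in_setI clsE inE in_set0 shv.
  apply/negbTE/negP => /andP[/andP[_ /eqP sy] yh]; by rewrite shg in sy.
have XY : cls v != cls p.
  apply/negP => /eqP/setP/(_ v); rewrite !clsE !inE !eqxx sgp sgh ?set22 //.
rewrite (bigD1 (cls p)) /=; last by rewrite cls_comps FX eqxx andbF.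
rewrite (bigD1 (cls v)) /=; last by rewrite cls_comps FY eqxx XY.
rewrite big1 ?muln1 //.
move=> C /andP[/andP[/andP[Cc FC] CX] CY].
case/imsetP: Cc => x _ Cx; rewrite -/(cls x) in Cx; subst C.
have := noFF x; case sx: (sg x); case hx: (sh x) => // _.
- exfalso; move/negP: FC; apply; apply/andP; split; apply/set0Pn.
    by exists q; rewrite in_setI clsE inE set22 sx hx sgq shg ?set22.
  by exists u; rewrite in_setI clsE inE set21 sx hx shu sgh ?set21.
- by move: CY; rewrite (@cls_eq x v) ?eqxx // ?sx ?hx ?shv // sgh // set22.
- by move: CX; rewrite (@cls_eq x p) ?eqxx // ?sx ?hx ?sgp // shg // set21.
Qed.

End Pair.


Lemma orient g h : g \in edges e -> h \in edges e -> h != g ->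
  exists p q, [/\ e p q, g = [set p; q] & forall x, x \in h -> connect (rem e g) x q].
Proof.
move=> gE hE hg.
have [p0 [q0 [epq gpq]]] := edge_rep gE.
have [x0 x0h] := edge_mem hE.
have cs : connect_sym (rem e g) by apply/sym_connect_sym/rem_sym.
have hx : forall x, x \in h -> connect (rem e g) x x0 by move=> x xh; exact: (in_edge_conn hE hg xh x0h).
case/orP: (connect_all_side x0 epq); rewrite -gpq => H.
  exists q0, p0; split; first by rewrite esym.
    by rewrite gpq set2C.
  by move=> x xh; apply: connect_trans (hx x xh) H.
exists p0, q0; split => // x xh; exact: connect_trans (hx x xh) H.
Qed.

Lemma count_m12 g h : g \in edges e -> h \in edges e -> g != h ->
  \sum_(P | Rp P) (sepb g P.1 P.2 && sepb h P.1 P.2 : nat) = 2 * m12 e g h.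
Proof.
move=> gE hE gh.
have hg : h != g by rewrite eq_sym.
have [p [q [epq gpq oh]]] := orient gE hE hg.
have [u [v [euv huv og]]] := orient hE gE gh.
have evu : e v u by rewrite esym.
rewrite set2C in huv.
subst g h.
by rewrite count_pairs // m12E.
Qed.


Lemma offDiag (S : {set {set T}}) :
  #|[set Q : {set T} * {set T} | [&& Q.1 \in S, Q.2 \in S & Q.2 != Q.1]]| = #|S| * (#|S| - 1).
Proof.
set D := [set Q | _].
have U : setX S S = D :|: [set (x, x) | x in S].
  apply/setP => [[a b]]; rewrite in_setX in_setU /D inE /=.
  case: (eqVneq b a) => [->|ba] /=.
    rewrite andbb !andbF /=; case aS: (a \in S); symmetry.
      by apply/imsetP; exists a.
    by apply/negbTE/imsetP => [[x xS [ax _]]]; move: aS; rewrite ax xS.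
  rewrite andbT.
  have -> : ((a, b) \in [set (x, x) | x in S]) = false.
    by apply/negbTE/imsetP => [[x xS [ax bx]]]; move: ba; rewrite ax bx eqxx.
  by rewrite orbF.
have I0 : D :&: [set (x, x) | x in S] = set0.
  apply/setP => [[a b]]; rewrite in_setI /D inE in_set0 /=.
  apply/negbTE/negP => /andP[/and3P[_ _ ba] /imsetP[x _ [ax bx]]].
  by move: ba; rewrite ax bx eqxx.
have := cardsX S S; rewrite U cardsU I0 cards0 subn0 card_imset; last by move=> x y [].
by move=> H; rewrite mulnBr muln1 -H addnK.
Qed.

Lemma conn_sym g a b : conn g a b = conn g b a.
Proof.
have cs : connect_sym (rem e g) by apply/sym_connect_sym/rem_sym.
apply/existsP/existsP => [[x /existsP[y /and3P[xa yb c]]]|[x /existsP[y /and3P[xa yb c]]]];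
  exists y; apply/existsP; exists x; by rewrite xa yb cs c.
Qed.

Lemma N_sym a b : N a b = N b a.
Proof.
rewrite /N /Sset; apply: eq_card => g; rewrite !inE /sepb conn_sym.
by case: (g != a); case: (g != b); rewrite ?andbF.
Qed.

Definition O (F : {set T} -> {set T} -> nat) := \sum_(P | Rp P) F P.1 P.2.

Lemma nested_O F : \sum_(a in edges e) \sum_(b in edges e | b != a) F a b = O F.
Proof. by rewrite pair_big_dep. Qed.

Lemma seqsum (s : seq {set T}) (P : pred {set T}) (G : {set T} -> nat) :
  uniq s -> (forall A, (A \in s) = (A \in edges e)) ->
  \sum_(k < size s | P (nth set0 s k)) G (nth set0 s k) = \sum_(a in edges e | P a) G a.
Proof.
move=> us hs.
have -> : \sum_(k < size s | P (nth set0 s k)) G (nth set0 s k) = \sum_(a <- s | P a) G a.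
  by rewrite (big_nth set0) big_mkord.
rewrite big_mkcond big_uniq //= [RHS]big_mkcondr.
by apply: eq_bigl => a; rewrite hs.
Qed.

Lemma conv (s : seq {set T}) F : uniq s -> (forall A, (A \in s) = (A \in edges e)) ->
  \sum_(k < size s) \sum_(l < size s | k < l) F (nth set0 s k) (nth set0 s l)
  + \sum_(k < size s) \sum_(l < size s | k < l) F (nth set0 s l) (nth set0 s k) = O F.
Proof.
move=> us hs.
have -> : \sum_(k < size s) \sum_(l < size s | k < l) F (nth set0 s l) (nth set0 s k)
        = \sum_(k < size s) \sum_(l < size s | l < k) F (nth set0 s k) (nth set0 s l).
  rewrite (eq_bigr (fun k : 'I_(size s) => \sum_(l < size s) if k < l then F (nth set0 s l) (nth set0 s k) else 0));
    last by move=> k _; rewrite big_mkcond.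
  rewrite exchange_big /=; apply: eq_bigr => k _; by rewrite [RHS]big_mkcond.
rewrite -big_split /=.
rewrite (eq_bigr (fun k : 'I_(size s) => \sum_(l < size s | l != k) F (nth set0 s k) (nth set0 s l))); last first.
  move=> k _; rewrite !(big_mkcond (fun l => _ < _)) [RHS]big_mkcond -big_split /=.
  apply: eq_bigr => l _; case: (ltngtP k l) => //= kl.
  - by rewrite addn0 neq_ltn kl orbT.
  - by rewrite add0n neq_ltn kl.
  - by rewrite addn0 (val_inj kl) eqxx.
rewrite -nested_O.
rewrite (eq_bigr (fun k : 'I_(size s) => \sum_(b in edges e | b != nth set0 s k) F (nth set0 s k) b)); last first.
  move=> k _.
  rewrite (eq_bigl (fun l : 'I_(size s) => nth set0 s l != nth set0 s k)); last first.
    by move=> l; rewrite nth_uniq ?ltn_ord.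
  by rewrite (seqsum (fun b => b != nth set0 s k) (F (nth set0 s k))).
rewrite (seqsum xpredT (fun a => \sum_(b in edges e | b != a) F a b) us hs).
by apply: eq_bigl => a; rewrite andbT.
Qed.


Lemma conv2 (s : seq {set T}) F : uniq s -> (forall A, (A \in s) = (A \in edges e)) ->
  (forall a b, a \in edges e -> b \in edges e -> a != b -> F a b = F b a) ->
  2 * \sum_(k < size s) \sum_(l < size s | k < l) F (nth set0 s k) (nth set0 s l) = O F.
Proof.
move=> us hs Fs; rewrite -(conv F us hs) mul2n -addnn; congr (_ + _).
apply: eq_bigr => k _; apply: eq_bigr => l kl; apply: Fs.
- by rewrite -hs mem_nth.
- by rewrite -hs mem_nth.
- by rewrite nth_uniq // neq_ltn kl.
Qed.

Lemma d_val P : Rp P -> edist e P.1 P.2 = (N P.1 P.2).+1.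
Proof. by case/and3P => aE bE ba; apply: edist_val; rewrite // eq_sym. Qed.

Lemma O_split F G : O (fun a b => F a b + G a b) = O F + O G.
Proof. by rewrite /O big_split. Qed.
Lemma O_mul c F : O (fun a b => c * F a b) = c * O F.
Proof. by rewrite /O big_distrr. Qed.
Lemma O_ext F G : (forall P, Rp P -> F P.1 P.2 = G P.1 P.2) -> O F = O G.
Proof. by move=> H; apply: eq_bigr. Qed.

Lemma O1 : O (fun _ _ => 1) = #|edges e| * (#|edges e| - 1).
Proof. by rewrite /O sum1dep_card -offDiag; apply: eq_card => P; rewrite !inE /Rp. Qed.

Lemma inSset g a b : (g \in Sset a b) = (g \in edges e) && sepb g a b.
Proof. by rewrite /Sset !inE. Qed.

Lemma ONN : O (fun a b => N a b * (N a b - 1)) = 2 * O (m12 e).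
Proof.
rewrite /O.
have step : forall P, Rp P -> N P.1 P.2 * (N P.1 P.2 - 1) =
    \sum_(Q | Rp Q) (sepb Q.1 P.1 P.2 && sepb Q.2 P.1 P.2 : nat).
  move=> P _; rewrite /N -offDiag -sum1dep_card big_mkcond [RHS]big_mkcond.
  apply: eq_bigr => Q _; rewrite !inSset /Rp.
  by case: (Q.1 \in edges e); case: (Q.2 \in edges e); case: (Q.2 != Q.1);
    case: (sepb Q.1 P.1 P.2); case: (sepb Q.2 P.1 P.2).
rewrite (eq_bigr _ step) exchange_big /= big_distrr /=.
apply: eq_bigr => Q /and3P[q1 q2 q21].
by rewrite count_m12 // eq_sym.
Qed.

Lemma m12_sym g h : g \in edges e -> h \in edges e -> g != h -> m12 e g h = m12 e h g.
Proof.
move=> gE hE gh.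
have hg : h != g by rewrite eq_sym.
have H1 := count_m12 gE hE gh; have H2 := count_m12 hE gE hg.
have E : \sum_(P | Rp P) (sepb g P.1 P.2 && sepb h P.1 P.2 : nat) =
          \sum_(P | Rp P) (sepb h P.1 P.2 && sepb g P.1 P.2 : nat).
  apply: eq_bigr => P _; exact: (congr1 nat_of_bool (andbC _ _)).
have H := etrans (Logic.eq_sym H1) (etrans E H2).
apply: double_inj; rewrite -!mul2n; exact: H.
Qed.

Lemma bin2_2 m : 2 * 'C(m, 2) = m * (m - 1).
Proof.
elim: m => // m IH; rewrite binS bin1 mulnDr IH.
case: m {IH} => // m; rewrite subn1 /= subSS subn0; nia.
Qed.

Lemma key_nat (s : seq {set T}) : uniq s -> (forall A, (A \in s) = (A \in edges e)) ->
  Wedge2 e + 2 * 'C(size s, 2) =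
  3 * Wedge e + 2 * \sum_(k < size s) \sum_(l < size s | k < l) m12 e (nth set0 s k) (nth set0 s l).
Proof.
move=> us hs.
have hse : forall A, (A \in enum (edges e)) = (A \in edges e) by move=> A; rewrite mem_enum.
have ue := enum_uniq (edges e).
have dsym : forall a b, a \in edges e -> b \in edges e -> a != b -> edist e a b = edist e b a.
  move=> a b aE bE ab; rewrite (edist_val aE bE ab) (edist_val bE aE _); last by rewrite eq_sym.
  by rewrite N_sym.
have hW : 2 * Wedge e = O (edist e) := conv2 ue hse dsym.
have hW2 : 2 * Wedge2 e = O (fun a b => edist e a b ^ 2).
  apply: (conv2 ue hse) => a b aE bE ab; by rewrite dsym.
have hS := conv2 us hs m12_sym.
have hsz : size s = #|edges e|.
  by rewrite -(card_uniqP us); apply: eq_card => A; rewrite hs.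
have hC : 2 * 'C(size s, 2) = O (fun _ _ => 1) by rewrite O1 bin2_2 hsz.
have hD : O (fun a b => edist e a b ^ 2) + 2 * O (fun _ _ => 1) =
          3 * O (edist e) + O (fun a b => N a b * (N a b - 1)).
  rewrite -O_mul -O_split -O_mul -O_split; apply: O_ext => P RP /=.
  rewrite d_val //; move: (N _ _) => n; case: n => [|n]; first by [].
  rewrite subn1 /=; nia.
have hN := ONN.
move: hW hW2 hS hC hD hN.
move: (Wedge e) (Wedge2 e) ('C(size s, 2)) (O (edist e)) (O (fun a b => edist e a b ^ 2))
  (O (fun _ _ => 1)) (O (fun a b => N a b * (N a b - 1))) (O (m12 e))
  (\sum_(k < size s) \sum_(l < size s | k < l) m12 e (nth set0 s k) (nth set0 s l)).
clear; lia.
Qed.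

End Tree.

Local Open Scope ring_scope.

Theorem mainTheorem4 (T : finType) (e : rel T) (s : seq {set T}) :
  is_tree e ->
  uniq s -> (forall A, (A \in s) = (A \in edges e)) ->
  WWedge e =
    2 * (Wedge e)%:R
    + (\sum_(k < size s) \sum_(l < size s | (k < l)%N)
          m12 e (nth set0 s k) (nth set0 s l))%:R
    - ('C(size s, 2))%:R.
Proof.
case=> es ei ec ea us hs.
have H := key_nat es ei ec ea us hs.
rewrite /WWedge.
move: H.
move: (Wedge e) (Wedge2 e) ('C(size s, 2))
  (\sum_(k < size s) \sum_(l < size s | (k < l)%N) m12 e (nth set0 s k) (nth set0 s l)).
move=> W W2 C S H.
have Hr : (W2%:R + 2 * C%:R = 3 * W%:R + 2 * S%:R :> rat).
  by rewrite -!natrM -!natrD H.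
lra.
Qed.
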